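(* Let $L$ be a simple Lie algebra over a field $k$ generated by its pure extremal elements, let $x,y\in E$ with $g(x,y)=1$ and let $L=\bigoplus_{i=-2}^2L_i$ be the associated $5$-grading. For $i\in\{-1,1\}$ let $Z_i=\{z\in L_i:[z,L_i]=0\}$. Then $Z_{-1}=Z_1=0$.
   Context: A nonzero $a\in L$ is extremal if there is $g_a\colon L\to k$ with $[a,[a,u]]=2g_a(u)a$, $[[a,u],[a,w]]=g_a([u,w])a+g_a(w)[a,u]-g_a(u)[a,w]$, $[a,[u,[a,w]]]=g_a([u,w])a-g_a(w)[a,u]-g_a(u)[a,w]$ for all $u,w$; sandwiches satisfy $[a,[a,u]]=0=[a,[u,[a,w]]]$; pure = non-sandwich; $E$ = set of extremal elements; $g$ = unique symmetric bilinear form with $g(a,u)=g_a(u)$ for $a\in E$. The $5$-grading associated with $x,y$: $L_{-2}=kx$, $L_{-1}=[x,U]$, $L_0=\{l:[x,l]\in kx,[y,l]\in ky\}$, $L_1=[y,U]$, $L_2=ky$, $U=\{u:g(u,x)=g(u,y)=g(u,[x,y])=0\}$. *)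

(* Defs.v *)
From HB Require Import structures.
From mathcomp Require Import all_boot all_order all_algebra.
Set Implicit Arguments. Unset Strict Implicit. Unset Printing Implicit Defensive.
Import GRing.Theory.
Local Open Scope ring_scope.

Section Lie.
Variables (k : fieldType) (L : lmodType k) (br : L -> L -> L).

Definition is_lie : Prop :=
  [/\ (forall (c : k) (u v w : L), br (c *: u + v) w = c *: br u w + br v w),
      (forall (c : k) (u v w : L), br w (c *: u + v) = c *: br w u + br w v),
      (forall u : L, br u u = 0) &
      (forall u v w : L, br u (br v w) + br v (br w u) + br w (br u v) = 0)].

Definition extremal_ids (a : L) (ga : L -> k) : Prop :=
  forall u w : L,
  [/\ br a (br a u) = (2 * ga u) *: a,
      br (br a u) (br a w) = ga (br u w) *: a + ga w *: br a u - ga u *: br a w &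
      br a (br u (br a w)) = ga (br u w) *: a - ga w *: br a u - ga u *: br a w].

Definition extremal (a : L) : Prop :=
  a != 0 /\ exists ga : L -> k, extremal_ids a ga.

Definition sandwich (a : L) : Prop :=
  forall u w : L, br a (br a u) = 0 /\ br a (br u (br a w)) = 0.

Definition pure (a : L) : Prop := extremal a /\ ~ sandwich a.

Definition extremal_form (g : L -> L -> k) : Prop :=
  [/\ (forall u v, g u v = g v u),
      (forall (c : k) (u v w : L), g (c *: u + v) w = c * g u w + g v w) &
      (forall a, extremal a -> extremal_ids a (g a))].

Definition subspace (S : L -> Prop) : Prop :=
  S 0 /\ (forall (c : k) u v, S u -> S v -> S (c *: u + v)).

Definition subalgebra (S : L -> Prop) : Prop :=
  subspace S /\ (forall u v, S u -> S v -> S (br u v)).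

Definition ideal (I : L -> Prop) : Prop :=
  subspace I /\ (forall u v, I v -> I (br u v)).

Definition generated_by_pure : Prop :=
  forall S : L -> Prop, subalgebra S -> (forall a, pure a -> S a) -> forall u, S u.

Definition simple_lie : Prop :=
  (exists u v, br u v != 0) /\
  forall I : L -> Prop, ideal I -> (forall u, I u -> u = 0) \/ (forall u, I u).

(* the 5-grading associated with x, y *)
Definition gradU (g : L -> L -> k) (x y : L) (u : L) : Prop :=
  g u x = 0 /\ g u y = 0 /\ g u (br x y) = 0.

Definition grad_m1 (g : L -> L -> k) (x y : L) (v : L) : Prop :=
  exists u, gradU g x y u /\ v = br x u.

Definition grad_p1 (g : L -> L -> k) (x y : L) (v : L) : Prop :=
  exists u, gradU g x y u /\ v = br y u.

Definition Zcenter (Li : L -> Prop) (z : L) : Prop :=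
  Li z /\ forall w, Li w -> br z w = 0.

End Lie.

(* Main.v *)
Require Import Defs.
From HB Require Import structures.
From mathcomp Require Import all_boot all_order all_algebra.
From mathcomp Require Import ring.
From Stdlib Require Import Classical.
Import GRing.Theory.
Local Open Scope ring_scope.

Section Comb.
Variables (k : fieldType) (L : lmodType k).

Fixpoint comb (cs : seq k) (vs : seq L) : L :=
  match cs, vs with
  | c :: cs', v :: vs' => c *: v + comb cs' vs'
  | _, _ => 0
  end.

Fixpoint sadd (cs ds : seq k) : seq k :=
  match cs, ds with
  | c :: cs', d :: ds' => (c + d) :: sadd cs' ds'
  | [::], _ => ds
  | _, [::] => cs
  end.

Fixpoint allz (cs : seq k) : Prop :=
  match cs with [::] => True | c :: cs' => c = 0 /\ allz cs' end.

Lemma comb_add cs ds vs : comb (sadd cs ds) vs = comb cs vs + comb ds vs.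
Proof.
elim: cs ds vs => [|c cs IH] [|d ds] [|v vs] //=; rewrite ?add0r ?addr0 //.
by rewrite IH scalerDl addrACA.
Qed.

Lemma comb_scale a cs vs : comb (map (fun c => a * c) cs) vs = a *: comb cs vs.
Proof.
elim: cs vs => [|c cs IH] [|v vs] //=; rewrite ?scaler0 //.
by rewrite IH scalerDr scalerA.
Qed.

Lemma comb_opp cs vs : comb (map (fun c => - c) cs) vs = - comb cs vs.
Proof.
elim: cs vs => [|c cs IH] [|v vs] //=; rewrite ?oppr0 //.
by rewrite IH opprD scaleNr.
Qed.

Lemma comb_atom i vs : nth 0 vs i = comb (rcons (nseq i 0) 1) vs.
Proof.
elim: i vs => [|i IH] [|v vs] //=; first by rewrite scale1r; case: vs => //=; rewrite addr0.
by rewrite IH scale0r add0r.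
Qed.

Lemma comb_allz cs vs : allz cs -> comb cs vs = 0.
Proof.
elim: cs vs => [|c cs IH] [|v vs] //= [-> H].
by rewrite scale0r add0r IH.
Qed.

End Comb.

Ltac atomize vs l i :=
  lazymatch l with
  | nil => idtac
  | cons ?v ?l' => let T := type of v in try (rewrite -[v]/(nth (0 : T) vs i)); atomize vs l' constr:(S i)
  end.

Ltac linsolve l :=
  let vs := fresh "vs" in
  apply/eqP; rewrite -subr_eq0; apply/eqP;
  rewrite ?(scaler0, scale0r, oppr0, addr0, add0r, subr0, sub0r);
  set vs := l;
  atomize vs l O;
  rewrite !comb_atom;
  repeat (rewrite -comb_add || rewrite -comb_opp || rewrite -comb_scale);
  apply: comb_allz; rewrite /=; repeat split; ring.


Arguments comb {k L}.
Arguments sadd {k}.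
Arguments allz {k}.

Section Base.
Variables (k : fieldType) (L : lmodType k) (br : L -> L -> L) (g : L -> L -> k).
Hypothesis Hlie : is_lie br.
Hypothesis Hform : extremal_form br g.

Lemma br0l w : br 0 w = 0.
Proof.
case: Hlie => H _ _ _.
have := H 1 0 0 w; rewrite !scale1r addr0 => /(congr1 (fun t => t - br 0 w)).
by rewrite subrr addrK.
Qed.
Lemma br0r w : br w 0 = 0.
Proof.
case: Hlie => _ H _ _.
have := H 1 0 0 w; rewrite !scale1r addr0 => /(congr1 (fun t => t - br w 0)).
by rewrite subrr addrK.
Qed.
Lemma brDl u v w : br (u + v) w = br u w + br v w.
Proof. by case: Hlie => H _ _ _; rewrite -{1}[u]scale1r H scale1r. Qed.
Lemma brDr u v w : br w (u + v) = br w u + br w v.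
Proof. by case: Hlie => _ H _ _; rewrite -{1}[u]scale1r H scale1r. Qed.
Lemma brZl c u w : br (c *: u) w = c *: br u w.
Proof. by case: Hlie => H _ _ _; rewrite -[c *: u]addr0 H br0l addr0. Qed.
Lemma brZr c u w : br w (c *: u) = c *: br w u.
Proof. by case: Hlie => _ H _ _; rewrite -[c *: u]addr0 H br0r addr0. Qed.
Lemma brNl u w : br (- u) w = - br u w.
Proof. by rewrite -scaleN1r brZl scaleN1r. Qed.
Lemma brNr u w : br w (- u) = - br w u.
Proof. by rewrite -scaleN1r brZr scaleN1r. Qed.
Lemma brBl u v w : br (u - v) w = br u w - br v w.
Proof. by rewrite brDl brNl. Qed.
Lemma brBr u v w : br w (u - v) = br w u - br w v.
Proof. by rewrite brDr brNr. Qed.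
Lemma brr u : br u u = 0.
Proof. by case: Hlie. Qed.
Lemma brC u v : br u v = - br v u.
Proof.
have := brr (u + v); rewrite brDl !brDr !brr add0r addr0.
by move/eqP; rewrite addr_eq0 => /eqP.
Qed.
Lemma jac a u w : br a (br u w) = br (br a u) w + br u (br a w).
Proof.
case: Hlie => _ _ _ H; have := H a u w.
rewrite (brC w (br a u)) (brC w a) brNr => /eqP.
rewrite -addrA addr_eq0 => /eqP ->.
by rewrite opprD !opprK addrC.
Qed.

Lemma gsym u v : g u v = g v u.
Proof. by case: Hform. Qed.
Lemma g0l w : g 0 w = 0.
Proof.
case: Hform => _ H _.
have := H 1 0 0 w; rewrite scale1r addr0 mul1r => /(congr1 (fun t => t - g 0 w)).
by rewrite subrr addrK.
Qed.
Lemma gDl u v w : g (u + v) w = g u w + g v w.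
Proof. by case: Hform => _ H _; rewrite -{1}[u]scale1r H mul1r. Qed.
Lemma gZl c u w : g (c *: u) w = c * g u w.
Proof. by case: Hform => _ H _; rewrite -[c *: u]addr0 H g0l addr0. Qed.
Lemma gNl u w : g (- u) w = - g u w.
Proof. by rewrite -scaleN1r gZl mulN1r. Qed.
Lemma gBl u v w : g (u - v) w = g u w - g v w.
Proof. by rewrite gDl gNl. Qed.
Lemma g0r w : g w 0 = 0. Proof. by rewrite gsym g0l. Qed.
Lemma gDr u v w : g w (u + v) = g w u + g w v.
Proof. by rewrite gsym gDl !(gsym w). Qed.
Lemma gZr c u w : g w (c *: u) = c * g w u.
Proof. by rewrite gsym gZl (gsym w). Qed.
Lemma gNr u w : g w (- u) = - g w u.
Proof. by rewrite gsym gNl (gsym w). Qed.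
Lemma gBr u v w : g w (u - v) = g w u - g w v.
Proof. by rewrite gDr gNr. Qed.


Hypothesis Hsimple : simple_lie br.

Lemma L_C (a : L) (lam : L -> k) : (forall w, br a w = lam w *: a) -> a = 0.
Proof.
move=> Ha.
have Hbr : forall u w, br a (br u w) = 0.
  move=> u w; rewrite jac Ha brZl Ha brZr (brC u a) Ha scalerN !scalerA.
  by rewrite mulrC subrr.
case: Hsimple => [[u0 [v0 Huv]] Hs].
pose B v := forall S : L -> Prop, subspace S -> (forall u w, S (br u w)) -> S v.
have HB : ideal br B.
  split; last by move=> u v _ S _ HS; apply: HS.
  split; first by move=> S [] .
  by move=> c u v Bu Bv S HS Hb; apply: HS.2; [apply: Bu | apply: Bv].
have Hall : forall v, B v.
  case: (Hs B HB) => // H0.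
  by move: Huv; rewrite (H0 (br u0 v0)) ?eqxx // => S _ HS; apply: HS.
have Hcen : forall v, br a v = 0.
  move=> v; apply: (Hall v (fun v => br a v = 0)) => //.
  split; first exact: br0r.
  by move=> c u w Hu Hw; rewrite brDr brZr Hu Hw scaler0 addr0.
pose C v := forall w, br v w = 0.
have HC : ideal br C.
  split; last by move=> u v Hv w; rewrite (brC u v) Hv oppr0 br0l.
  split; first exact: br0l.
  by move=> c u v Hu Hv w; rewrite brDl brZl Hu Hv scaler0 addr0.
case: (Hs C HC) => [H0 | H1]; first exact: H0.
by move: Huv; rewrite H1 eqxx.
Qed.

Lemma aux_kill a (c : L -> k) d : a != 0 ->
  (forall w, c w *: a = d *: br a w) -> d = 0 /\ forall w, c w = 0.
Proof.
move=> a0 H.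
have d0 : d = 0.
  case: (eqVneq d 0) => // dn0; case/eqP: a0.
  apply: (@L_C a (fun w => d^-1 * c w)) => w.
  by rewrite -scalerA H scalerA (mulVf dn0) scale1r.
split => // w; have := H w; rewrite d0 scale0r => /eqP.
by rewrite scaler_eq0 (negPf a0) orbF => /eqP.
Qed.

Lemma fa0 {a f} : a != 0 -> extremal_ids br a f ->
  f a = 0 /\ forall w, f (br a w) = 0.
Proof.
move=> a0 H; apply: (@aux_kill a (fun w => f (br a w)) (f a) a0) => w.
case: (H a w) => _ E _; move: E; rewrite brr br0l scaler0 addr0.
by move/eqP; rewrite eq_sym subr_eq0 => /eqP.
Qed.

Lemma comm0 {a b f} : a != 0 -> extremal_ids br a f -> br a b = 0 ->
  f b = 0 /\ forall w, f (br b w) = 0.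
Proof.
move=> a0 H ab0; apply: (@aux_kill a (fun w => f (br b w)) (f b) a0) => w.
case: (H b w) => _ E _; move: E; rewrite ab0 br0l scaler0 addr0.
by move/eqP; rewrite eq_sym subr_eq0 => /eqP.
Qed.

Lemma ext_ids {a} : extremal br a -> extremal_ids br a (g a).
Proof. by case: Hform => _ _ H /H. Qed.
Lemma ext_ne0 {a} : extremal br a -> a != 0.
Proof. by case. Qed.

Lemma pinv {a b} : extremal br a -> extremal br b ->
  forall w, g a (br b w) = - g b (br a w).
Proof.
move=> ea eb w; have a0 := ext_ne0 ea; have b0 := ext_ne0 eb.
have Ia := ext_ids ea; have Ib := ext_ids eb.
case: (eqVneq (br a b) 0) => [ab0 | abn0].
  have [_ ->] := comm0 a0 Ia ab0.
  have ba0 : br b a = 0 by rewrite brC ab0 oppr0.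
  by have [_ ->] := comm0 b0 Ib ba0; rewrite oppr0.
have ban0 : br b a != 0 by rewrite brC oppr_eq0.
case: (Ia b w) => _ _ E1.
case: (Ib a (br a w)) => _ _ E2.
case: (Ia w w) => E3 _ _.
case: (Ib a a) => E4 _ _.
move: E2; rewrite E1 E3 gZr !brBr !brZr (brC a b) brNr E4 (gsym a b).
rewrite scalerN opprK scalerA mulrCA mulrA.
move/addIr; rewrite addrC => /addrI H.
have : (g a (br b w) + g b (br a w)) *: br b a = 0 by rewrite scalerDl H addNr.
move/eqP; rewrite scaler_eq0 (negPf ban0) orbF addr_eq0 => /eqP //.
Qed.
Definition expf a (f : L -> k) v := v + br a v + f v *: a.

Lemma exp_hom a f : extremal_ids br a f ->
  forall u v, expf a f (br u v) = br (expf a f u) (expf a f v).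
Proof.
move=> H u v; rewrite /expf !brDl !brDr !brZl !brZr.
case: (H u v) => _ E2 _; case: (H u u) => E1u _ _ ; case: (H v v) => E1v _ _.
rewrite E2 (brC u a) (brC (br a u) a) E1u E1v brr jac.
linsolve [:: br (br a u) v; br u (br a v); br u v; br a u; br a v; a].
Qed.
Definition expi a (f : L -> k) v := v - br a v + f v *: a.

Lemma expi_hom a f : extremal_ids br a f ->
  forall u v, expi a f (br u v) = br (expi a f u) (expi a f v).
Proof.
move=> H u v; rewrite /expi !brDl !brDr ?brBl ?brBr ?brNl ?brNr !brZl !brZr.
case: (H u v) => _ E2 _; case: (H u u) => E1u _ _ ; case: (H v v) => E1v _ _.
rewrite E2 (brC u a) (brC (br a u) a) E1u E1v brr jac.
linsolve [:: br (br a u) v; br u (br a v); br u v; br a u; br a v; a].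
Qed.

Section LinF.
Variables (f : L -> k).
Hypothesis Hf : forall c u v, f (c *: u + v) = c * f u + f v.
Lemma fD u v : f (u + v) = f u + f v.
Proof. by rewrite -{1}[u]scale1r Hf mul1r. Qed.
Lemma f0 : f 0 = 0.
Proof.
have := fD 0 0; rewrite addr0 => /(congr1 (fun t => t - f 0)).
by rewrite subrr addrK.
Qed.
Lemma fZ c u : f (c *: u) = c * f u.
Proof. by rewrite -[c *: u]addr0 Hf f0 addr0. Qed.
Lemma fN u : f (- u) = - f u.
Proof. by rewrite -scaleN1r fZ mulN1r. Qed.
Lemma fB u v : f (u - v) = f u - f v.
Proof. by rewrite fD fN. Qed.

Lemma expf_lin a c u v : expf a f (c *: u + v) = c *: expf a f u + expf a f v.
Proof.
rewrite /expf Hf brDr brZr.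
linsolve [:: u; v; br a u; br a v; a].
Qed.
Lemma expi_lin a c u v : expi a f (c *: u + v) = c *: expi a f u + expi a f v.
Proof.
rewrite /expi Hf brDr brZr.
linsolve [:: u; v; br a u; br a v; a].
Qed.

Lemma expif a v : a != 0 -> extremal_ids br a f -> expi a f (expf a f v) = v.
Proof.
move=> a0 H; have [fa fb] := fa0 a0 H.
rewrite /expi /expf !fD fZ fa fb !brDr brZr brr.
case: (H v v) => E1 _ _; rewrite E1.
linsolve [:: v; br a v; a].
Qed.
Lemma expfi a v : a != 0 -> extremal_ids br a f -> expf a f (expi a f v) = v.
Proof.
move=> a0 H; have [fa fb] := fa0 a0 H.
rewrite /expi /expf !fD ?fN fZ fa fb !brDr ?brNr brZr brr.
case: (H v v) => E1 _ _; rewrite E1.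
linsolve [:: v; br a v; a].
Qed.
End LinF.
Lemma hom_transport (phi psi : L -> L) b f :
  (forall u v, phi (br u v) = br (phi u) (phi v)) ->
  (forall c u v, phi (c *: u + v) = c *: phi u + phi v) ->
  (forall v, psi (phi v) = v) -> (forall v, phi (psi v) = v) ->
  extremal_ids br b f -> extremal_ids br (phi b) (fun t => f (psi t)).
Proof.
move=> hphi lphi psiphi phipsi H u w.
have phiD x y : phi (x + y) = phi x + phi y by rewrite -[x]scale1r lphi !scale1r.
have phi0 : phi 0 = 0.
  by have := phiD 0 0; rewrite addr0 => /(congr1 (fun t => t - phi 0)); rewrite subrr addrK.
have phiZ c x : phi (c *: x) = c *: phi x by rewrite -[c *: x]addr0 lphi phi0 addr0.
have phiN x : phi (- x) = - phi x by rewrite -scaleN1r phiZ scaleN1r.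
have [u' ->] : exists u', u = phi u' by exists (psi u).
have [w' ->] : exists w', w = phi w' by exists (psi w).
rewrite -!hphi !psiphi.
case: (H u' w') => E1 E2 E3; split.
- by rewrite E1 phiZ.
- by rewrite E2 !phiD !phiN !phiZ.
- by rewrite E3 !phiD !phiN !phiZ.
Qed.

Lemma uniq_form e f1 f2 : ~ sandwich br e ->
  extremal_ids br e f1 -> extremal_ids br e f2 -> forall t, f1 t = f2 t.
Proof.
move=> ns H1 H2 t; apply/eqP; rewrite -subr_eq0; apply/eqP.
case: (eqVneq (f1 t - f2 t) 0) => // cn0; exfalso; apply ns.
have e0 : e != 0.
  apply/eqP => e0; apply ns => u w; by rewrite e0 !br0l.
set c := f1 t - f2 t.
have two0 : (2 : k) = 0.
  case: (H1 t t) => A _ _; case: (H2 t t) => B _ _.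
  have : (2 * c) *: e = 0 by rewrite mulrBr scalerBl -A -B subrr.
  move/eqP; rewrite scaler_eq0 (negPf e0) orbF mulf_eq0 (negPf cn0) orbF.
  by move/eqP.
have E1 : forall u, br e (br e u) = 0.
  by move=> u; case: (H1 u u) => -> _ _; rewrite two0 mul0r scale0r.
have E : forall w, br e w = c^-1 *: ((f1 (br t w) - f2 (br t w)) *: e + (f1 w - f2 w) *: br e t).
  move=> w; case: (H1 t w) => _ A _; case: (H2 t w) => _ B _.
  have : c *: br e w = (f1 (br t w) - f2 (br t w)) *: e + (f1 w - f2 w) *: br e t.
    apply/eqP; rewrite -subr_eq0; apply/eqP.
    have -> : c *: br e w - ((f1 (br t w) - f2 (br t w)) *: e + (f1 w - f2 w) *: br e t)
       = - ((f1 (br t w) *: e + f1 w *: br e t - f1 t *: br e w) -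
            (f2 (br t w) *: e + f2 w *: br e t - f2 t *: br e w)).
      rewrite /c; linsolve [:: br e w; br e t; e].
    by rewrite -A -B subrr oppr0.
  by move=> <-; rewrite scalerA mulVf ?scale1r.
move=> u w; split; first exact: E1.
rewrite (E w) !brZr !brDr !brZr (brC u e) brNr E1 oppr0 jac E1 br0r addr0 (E u).
rewrite brZl brDl !brZl brr E1.
by rewrite !scaler0 ?addr0 ?add0r ?scaler0 ?addr0 ?scaler0.
Qed.
Lemma g_lin a : forall c u v, g a (c *: u + v) = c * g a u + g a v.
Proof. by move=> c u v; rewrite gDr gZr. Qed.

Lemma transport {a b} : extremal br a -> extremal br b -> ~ sandwich br b ->
  [/\ extremal br (expf a (g a) b), ~ sandwich br (expf a (g a) b) &
      forall t, g (expf a (g a) b) t = g b (expi a (g a) t)].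
Proof.
move=> ea eb nsb; have a0 := ext_ne0 ea; have b0 := ext_ne0 eb.
have Ia := ext_ids ea; have Ib := ext_ids eb.
have hphi := exp_hom _ _ Ia; have hpsi := expi_hom _ _ Ia.
have lphi := @expf_lin (g a) (g_lin a) a.
have psiphi : forall v, expi a (g a) (expf a (g a) v) = v.
  by move=> v; apply: expif => //; apply: g_lin.
have phipsi : forall v, expf a (g a) (expi a (g a) v) = v.
  by move=> v; apply: expfi => //; apply: g_lin.
have psi0 : expi a (g a) 0 = 0 by rewrite /expi br0r g0r scale0r !subr0 addr0.
have Ie := @hom_transport _ _ b (g b) hphi lphi psiphi phipsi Ib.
have e0 : expf a (g a) b != 0.
  apply/eqP => H; move/eqP: b0; apply; by rewrite -(psiphi b) H psi0.
have nse : ~ sandwich br (expf a (g a) b).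
  move=> sw; apply: nsb => u w.
  rewrite -(psiphi (br b (br b u))) -(psiphi (br b (br u (br b w)))) !hphi.
  by case: (sw (expf a (g a) u) (expf a (g a) w)) => -> ->; rewrite psi0.
have ee : extremal br (expf a (g a) b) by split => //; exists (fun t => g b (expi a (g a) t)).
split => //; exact: (@uniq_form _ _ _ nse (ext_ids ee) Ie).
Qed.

Lemma HF {a b} : extremal br a -> extremal br b -> ~ sandwich br b ->
  forall t, g (br a b) t = - g b (br a t).
Proof.
move=> ea eb nsb t; have [_ _ H] := transport ea eb nsb.
have := H t; rewrite /expf /expi !gDl gZl !gDr ?gNr gZr (gsym b a) => H1.
apply: (addrI (g b t)); apply: (addIr (g a b * g a t)); rewrite H1; ring.
Qed.
Lemma lin_use (X A B : L) (c : k) : X = 0 -> A - B = c *: X -> A = B.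
Proof. by move=> X0; rewrite X0 scaler0 => /eqP; rewrite subr_eq0 => /eqP. Qed.

Lemma hxy_ne0 {x y} : extremal br x -> extremal br y -> g x y = 1 -> br x y != 0.
Proof.
move=> ex ey gxy; apply/eqP => H.
have [H1 _] := comm0 (ext_ne0 ex) (ext_ids ex) H.
by move: H1; rewrite gxy => /eqP; rewrite oner_eq0.
Qed.

Lemma not_both_sw {x y} : extremal br x -> extremal br y -> g x y = 1 ->
  sandwich br x -> sandwich br y -> False.
Proof.
move=> ex ey gxy sx sy.
have hn := hxy_ne0 ex ey gxy.
have Ix := ext_ids ex; have Iy := ext_ids ey.
have gyx : g y x = 1 by rewrite gsym.
have Ex : forall w, br x w = g x (br y w) *: x - g x w *: br x y.
  move=> w; case: (Ix y w) => _ _ H3; case: (sx y w) => _ H0.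
  have X0 := etrans (esym H3) H0.
  apply: (@lin_use _ _ _ (-1) X0); rewrite gxy.
  linsolve [:: br x w; x; br x y].
have Ey : forall w, br y w = g y (br x w) *: y - g y w *: br y x.
  move=> w; case: (Iy x w) => _ _ H3; case: (sy x w) => _ H0.
  have X0 := etrans (esym H3) H0.
  apply: (@lin_use _ _ _ (-1) X0); rewrite gyx.
  linsolve [:: br y w; y; br y x].
move/eqP: hn; apply.
apply: (@L_C _ (fun w => g y (br x w) + g x (br y w))) => w.
have -> : br (br x y) w = br x (br y w) - br y (br x w) by rewrite jac addrK.
have E1 : br x (br y w) = g y (br x w) *: br x y - g y w *: br x (br y x).
  by rewrite (Ey w) brBr !brZr.
have E2 : br y (br x w) = g x (br y w) *: br y x - g x w *: br y (br x y).
  by rewrite (Ex w) brBr !brZr.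
have Z1 : br x (br y x) = 0 by rewrite (brC y x) brNr (sx y y).1 oppr0.
have Z2 : br y (br x y) = 0 by rewrite (brC x y) brNr (sy x x).1 oppr0.
rewrite E1 E2 Z1 Z2 (brC y x).
linsolve [:: br x y].
Qed.
Lemma HFxy {x y} : extremal br x -> extremal br y -> g x y = 1 ->
  forall t, g (br x y) t = g x (br y t).
Proof.
move=> ex ey gxy t.
case: (classic (sandwich br y)) => sy.
  case: (classic (sandwich br x)) => sx.
    by case: (not_both_sw ex ey gxy sx sy).
  by rewrite (brC x y) gNl (HF ey ex sx) opprK.
by rewrite (HF ex ey sy) (pinv ex ey).
Qed.

Hypothesis Hgen : generated_by_pure br.

Definition Ipred v := forall a, pure br a -> g a v = 0.

Lemma Ipred_lin c u v : Ipred u -> Ipred v -> Ipred (c *: u + v).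
Proof. by move=> Hu Hv a pa; rewrite gDr gZr Hu // Hv // mulr0 addr0. Qed.

Lemma I_ideal : ideal br Ipred.
Proof.
have Isub : subspace Ipred by split; [move=> a _; exact: g0r | exact: Ipred_lin].
split => //.
pose N u := forall v, Ipred v -> Ipred (br u v).
have HN : subalgebra br N.
  split; first split.
  - by move=> v _; rewrite br0l; exact: Isub.1.
  - by move=> c u1 u2 H1 H2 v Iv; rewrite brDl brZl; apply: Ipred_lin; [apply: H1 | apply: H2].
  - move=> u1 u2 H1 H2 v Iv.
    have -> : br (br u1 u2) v = (-1) *: br u2 (br u1 v) + br u1 (br u2 v).
      by rewrite (jac u1 u2 v) scaleN1r addrC addrK.
    by apply: Ipred_lin; [apply: H2; apply: H1 | apply: H1; apply: H2].
have pN : forall b, pure br b -> N b.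
  move=> b [eb nsb] v Iv a [ea nsa].
  have [ee nse Hg] := transport eb ea nsa.
  have := Iv _ (conj ee nse); rewrite Hg /expi !gDr gNr gZr.
  rewrite (Iv a (conj ea nsa)) (Iv b (conj eb nsb)) mul0r addr0 sub0r => /eqP.
  by rewrite oppr_eq0 => /eqP.
by move=> u v Iv; exact: (Hgen N HN pN u v Iv).
Qed.

Lemma I_trivial v : Ipred v -> v = 0.
Proof.
case: Hsimple => [[u0 [v0 Huv]] Hs].
case: (Hs Ipred I_ideal) => [H0 | Hall]; first exact: H0.
exfalso.
have nopure : ~ (exists p, pure br p).
  move=> [p [ep nsp]]; apply nsp => u w.
  case: (ext_ids ep u w) => E1 _ E3; rewrite E1 E3.
  rewrite !(Hall _ p (conj ep nsp)).
  by rewrite mulr0 !scale0r !subr0.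
move/eqP: Huv; apply.
have HS : subalgebra br (fun v => v = 0).
  split; first split => //.
  - by move=> c u w -> ->; rewrite scaler0 addr0.
  - by move=> u w -> ->; rewrite br0l.
by rewrite (Hgen _ HS (fun a pa => False_ind _ (nopure (ex_intro _ a pa))) u0) br0l.
Qed.
Lemma main_m1 {x y} : extremal br x -> extremal br y -> g x y = 1 ->
  (forall t, g (br x y) t = g x (br y t)) ->
  forall u, g u x = 0 -> g u y = 0 -> g u (br x y) = 0 ->
  (forall w, g w x = 0 -> g w y = 0 -> g w (br x y) = 0 ->
     br (br x u) (br x w) = 0) ->
  br x u = 0.
Proof.
move=> ex ey gxy HFt u Hux Huy Huh Hz.
have x0 := ext_ne0 ex; have Ix := ext_ids ex; have Iy := ext_ids ey.
have [gxx gxb] := fa0 x0 Ix; have [gyy gyb] := fa0 (ext_ne0 ey) Iy.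
have gyx : g y x = 1 by rewrite gsym.
have gxu : g x u = 0 by rewrite gsym.
have KeyA : forall v1, g x v1 = 0 -> g x (br u v1) = 0.
  move=> v1 gxv1.
  set s := - g y (br x v1).
  set w' := - br y (br x v1) + s *: br x y.
  have Uw1 : g w' x = 0.
    rewrite gsym /w' gDr gNr gZr gxb (pinv ex ey).
    by case: (Ix v1 v1) => -> _ _; rewrite gZr gxv1 mulr0 mul0r oppr0 oppr0 add0r mulr0.
  have Uw2 : g w' y = 0.
    rewrite gsym /w' gDr gNr gZr gyb (brC x y) gNr gyb.
    by rewrite oppr0 mulr0 addr0.
  have Uw3 : g w' (br x y) = 0.
    rewrite gsym HFt /w' brDr brNr brZr gDr gNr gZr.
    case: (Iy (br x v1) (br x v1)) => -> _ _.
    rewrite (brC x y) brNr; case: (Iy x x) => -> _ _.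
    rewrite gNr !gZr gxy gyx /s; ring.
  have Zw := Hz w' Uw1 Uw2 Uw3.
  have E : br x w' = br x v1 + (2 * s - g x (br y v1)) *: x.
    rewrite /w' brDr brNr brZr; case: (Ix y v1) => _ _ ->.
    case: (Ix y y) => -> _ _; rewrite gxv1 gxy.
    linsolve [:: br x v1; br x y; x].
  move: Zw; rewrite E brDr brZr (brC (br x u) x); case: (Ix u u) => -> _ _.
  case: (Ix u v1) => _ -> _; rewrite gxv1 gxu.
  rewrite ?(mulr0, scale0r, oppr0, scaler0, addr0, subr0) => /eqP.
  by rewrite scaler_eq0 (negPf x0) orbF => /eqP.
have Phiy : g x (br u y) = 0.
  by rewrite (brC u y) gNr -HFt gsym Huh oppr0.
apply: I_trivial => a [ea nsa].
rewrite (pinv ea ex) (brC a u) gNr opprK.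
have -> : a = (a - g x a *: y) + g x a *: y by rewrite subrK.
rewrite brDr brZr gDr gZr Phiy mulr0 addr0 KeyA //.
by rewrite gBr gZr gxy mulr1 subrr.
Qed.
Lemma final x y : extremal br x -> extremal br y -> g x y = 1 ->
  (forall z, Zcenter br (grad_m1 br g x y) z -> z = 0) /\
  (forall z, Zcenter br (grad_p1 br g x y) z -> z = 0).
Proof.
move=> ex ey gxy.
have gyx : g y x = 1 by rewrite gsym.
have ghyx : forall w, g w (br y x) = - g w (br x y) by move=> w; rewrite (brC y x) gNr.
split.
- move=> z [[u [[Hux [Huy Huh]] ->]] Hz].
  apply: (main_m1 ex ey gxy (HFxy ex ey gxy)) => // w Hwx Hwy Hwh.
  by apply: Hz; exists w.
- move=> z [[u [[Hux [Huy Huh]] ->]] Hz].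
  apply: (main_m1 ey ex gyx (HFxy ey ex gyx)) => //; first by rewrite ghyx Huh oppr0.
  move=> w Hwy Hwx Hwh; apply: Hz; exists w; split => //; split => //; split => //.
  by move: Hwh; rewrite ghyx => /eqP; rewrite oppr_eq0 => /eqP.
Qed.
End Base.

Theorem lemma2p11 (k : fieldType) (L : lmodType k) (br : L -> L -> L)
  (g : L -> L -> k) (x y : L) :
  is_lie br -> simple_lie br -> generated_by_pure br ->
  extremal_form br g ->
  extremal br x -> extremal br y -> g x y = 1 ->
  (forall z, Zcenter br (grad_m1 br g x y) z -> z = 0) /\
  (forall z, Zcenter br (grad_p1 br g x y) z -> z = 0).
Proof.
move=> Hl Hs Hg Hf ex ey gxy.
exact: (@final k L br g Hl Hf Hs Hg x y ex ey gxy).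
Qed.
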